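(* Let $X$ be a real Banach space and let $C \subset X$ be a closed, convex and bounded set with $0 \in \mathrm{int}(C)$. Let $\{x_n\}_{n \in \mathbb{N}}$ be a dense subset of the boundary $\partial C$ of $C$ such that for every $n$ there is exactly one functional $f_n \in X^*$ with $\|f_n\| = 1$ supporting $C$ at $x_n$; i.e. $f_n(x_n) = d_n$ and $f_n(v) \le d_n$ for all $v \in C$. Put $D_n = \{x \in X : f_n(x) \le d_n\}$. Then $C = \bigcap_{n \in \mathbb{N}} D_n$. *)

(* Defs.v *)
From HB Require Import structures.
From mathcomp Require Import all_boot all_order all_algebra.
From mathcomp Require Import all_classical all_reals all_analysis.
Set Implicit Arguments. Unset Strict Implicit. Unset Printing Implicit Defensive.
Import Order.TTheory GRing.Theory Num.Theory.
Import numFieldNormedType.Exports.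
Local Open Scope classical_set_scope.
Local Open Scope ring_scope.

Definition lin_functional (R : realType) (X : normedModType R) (f : X -> R) :=
  forall (a : R) (u v : X), f (a *: u + v) = a * f u + f v.

Definition dual_elt (R : realType) (X : normedModType R) (f : X -> R) :=
  lin_functional f /\ continuous f.

Definition dual_norm (R : realType) (X : normedModType R) (f : X -> R) : R :=
  sup [set `|f x| | x in [set x : X | `|x| <= 1]].

Definition bdry (R : realType) (X : normedModType R) (C : set X) : set X :=
  closure C `\` interior C.

(* f supports C at x with value d = f x: f x = d and f v <= d on C. *)
Definition supports (R : realType) (X : normedModType R) (C : set X)
    (f : X -> R) (x : X) :=
  x \in C /\ forall v, C v -> f v <= f x.

(* Main.v *)
Require Import Defs.
From HB Require Import structures.
From mathcomp Require Import all_boot all_order all_algebra.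
From mathcomp Require Import all_classical all_reals all_analysis.
From mathcomp Require Import lra.
Import Order.TTheory GRing.Theory Num.Theory.
Import numFieldNormedType.Exports.
Local Open Scope classical_set_scope.
Local Open Scope ring_scope.
Set Implicit Arguments. Unset Strict Implicit.

Section L.
Variables (R : realType) (X : normedModType R) (f : X -> R).
Hypothesis hf : lin_functional f.

Lemma lf0 : f 0 = 0.
Proof. have := hf 1 0 0; rewrite scaler0 addr0 mul1r; lra. Qed.

Lemma lfZ a u : f (a *: u) = a * f u.
Proof. by have := hf a u 0; rewrite addr0 lf0 addr0. Qed.

Lemma lfB u v : f (u - v) = f u - f v.
Proof. have := hf (-1) v u; rewrite scaleN1r mulN1r addrC => ->; by rewrite addrC. Qed.
End L.

Lemma dual_bound (R : realType) (X : normedModType R) (f : X -> R) :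
  dual_elt f -> dual_norm f = 1 -> forall v, `|f v| <= `|v|.
Proof.
move=> [hl hc] hn.
have := cvgr_dist_lt _ _ (hc 0) _ (@ltr01 R).
move=> H0.
have [d d0 hd] := (nbhs_norm0P (P := fun t : X => `|f 0 - f t| < 1)).1 (H0 _).
have ub : forall x : X, `|x| <= 1 -> `|f x| <= 2 / d.
  move=> x hx.
  have : `|f 0 - f ((d / 2) *: x)| < 1.
    apply: hd => /=; rewrite normrZ ger0_norm ?divr_ge0 ?ltW //.
    have : d / 2 * `|x| <= d / 2 by apply: ler_piMr => //; apply: divr_ge0 => //; apply: ltW.
    move=> h; apply: (le_lt_trans h); rewrite ltr_pdivrMr // ltr_pMr // ltr1n //.
  have d2 : 0 <= d / 2 by rewrite divr_ge0 // ltW.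
  rewrite (lf0 hl) sub0r normrN (lfZ hl) normrM (ger0_norm d2) => h.
  rewrite ler_pdivlMr //; rewrite mulrC; apply: ltW.
  move: h; rewrite -mulrA (mulrC _ (`|f x|)) mulrA ltr_pdivrMr //; lra.
have hs : has_ubound [set `|f x| | x in [set x : X | `|x| <= 1]].
  by exists (2 / d) => _ [x hx <-]; exact: ub.
have unit : forall x : X, `|x| <= 1 -> `|f x| <= 1.
  move=> x hx; rewrite -hn; apply: ub_le_sup => //; by exists x.
move=> v; have [->|v0] := eqVneq v 0; first by rewrite (lf0 hl) normr0.
have nv : 0 < `|v| by rewrite normr_gt0.
have -> : f v = `|v| * f (`|v|^-1 *: v) by rewrite -(lfZ hl) scalerA divff ?scale1r // gt_eqF.
rewrite normrM normr_id -[X in _ <= X](mulr1 `|v|); apply: ler_wpM2l; [exact: ltW| apply: unit].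
by rewrite normrZ normrV ?unitfE ?gt_eqF // normr_id mulVf ?gt_eqF.
Qed.

Lemma dual_low (R : realType) (X : normedModType R) (f : X -> R) :
  dual_elt f -> dual_norm f = 1 -> exists u : X, `|u| <= 1 /\ 1/2 < f u.
Proof.
move=> hd hn; have hb := dual_bound hd hn.
have hs : has_sup [set `|f x| | x in [set x : X | `|x| <= 1]].
  split; first by exists `|f 0|, 0 => //=; rewrite normr0.
  by exists 1 => _ [x hx <-]; apply: le_trans (hb x) hx.
have h2 : (0 : R) < 1/2 by lra.
have [_ [u hu <-]] := sup_adherent h2 hs.
rewrite -/(dual_norm f) hn => hlt.
have [fp|fn] := lerP 0 (f u).
  by exists u; split => //; move: hlt; rewrite ger0_norm //; lra.
exists (- u); split; first by rewrite normrN.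
have -> : f (- u) = - f u by rewrite -scaleN1r (lfZ hd.1) mulN1r.
move: hlt; rewrite ltr0_norm //; lra.
Qed.

Theorem lemma12 (R : realType) (X : completeNormedModType R) (C : set X)
  (x : nat -> X) (f : nat -> X -> R) :
  closed C -> convex_set C -> bounded_set C -> interior C 0 ->
  (forall n, bdry C (x n)) ->
  bdry C `<=` closure (range x) ->
  (forall n, dual_elt (f n) /\ dual_norm (f n) = 1 /\ supports C (f n) (x n)) ->
  (forall n (g : X -> R), dual_elt g -> dual_norm g = 1 ->
     supports C g (x n) -> g = f n) ->
  C = \bigcap_n [set y | f n y <= f n (x n)].
Proof.
move=> Ccl _ _ C0 _ dense hf _.
rewrite eqEsubset; split.
  by move=> v Cv n _ /=; exact: (hf n).2.2.2 v Cv.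
move=> y Hy.
have [//|nCy] := pselect (C y).
exfalso.
have [r r0 hr] := (nbhs_norm0P (P := C)).1 C0.
have hc : forall n, r / 4 < f n (x n).
  move=> n; have [hd [hn [_ hs]]] := hf n.
  have [u [hu hfu]] := dual_low hd hn.
  have Cw : C ((r / 2) *: u).
    apply: hr => /=; rewrite normrZ ger0_norm; last by rewrite divr_ge0 // ltW.
    have h1 : r / 2 * `|u| <= r / 2 by apply: ler_piMr => //; rewrite divr_ge0 // ltW.
    apply: (le_lt_trans h1); rewrite ltr_pdivrMr // ltr_pMr // ltr1n //.
  have := hs _ Cw; rewrite (lfZ hd.1).
  have : r / 4 < r / 2 * f n u.
    have : r / 2 * (1 / 2) < r / 2 * f n u by rewrite ltr_pM2l // divr_gt0.
    suff -> : r / 4 = r / 2 * (1 / 2) by [].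
    by lra.
  move=> h1 h2; exact: (lt_le_trans h1 h2).
set S := [set s : R | 0 <= s <= 1 /\ C (s *: y)].
have S0 : S 0 by split; [rewrite lexx ler01 | rewrite scale0r; apply: hr => /=; rewrite normr0].
have Sub : ubound S 1 by move=> s [/andP [_ ->]].
have hS : has_sup S by split; [exists 0 | exists 1].
set t := sup S.
have t0 : 0 <= t by apply: sup_upper_bound.
have t1 : t <= 1 by apply: ge_sup => //; exists 0.
have ny : 0 <= `|y| by [].
have Ct : C (t *: y).
  rewrite (closure_id C).1 // => B /nbhs_normP [e /= e0 he].
  have ee : 0 < e / (`|y| + 1) by rewrite divr_gt0 // ltr_wpDl.
  have [s Ss hs] := sup_adherent ee hS.
  have st : s <= t by apply: sup_upper_bound.
  exists (s *: y); split; first by case: Ss.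
  apply: he => /=; rewrite -scalerBl normrZ ger0_norm ?subr_ge0 //.
  have h1 : (t - s) * `|y| <= e / (`|y| + 1) * `|y|.
    apply: ler_wpM2r => //; apply: ltW; have hs2 : t - e / (`|y| + 1) < s := hs; lra.
  apply: (le_lt_trans h1); rewrite mulrAC ltr_pdivrMr ?ltr_wpDl //.
  by rewrite ltr_pM2l //; lra.
have tn1 : t != 1 by apply/eqP => t1e; apply: nCy; move: Ct; rewrite t1e scale1r.
have tlt : t < 1 by rewrite lt_neqAle tn1.
have nint : ~ interior C (t *: y).
  move=> /nbhs_normP [e /= e0 he].
  have ee : 0 < e / (`|y| + 1) by rewrite divr_gt0 // ltr_wpDl.
  set dd := Num.min (1 - t) (e / (`|y| + 1)).
  have dd0 : 0 < dd by rewrite lt_min ee subr_gt0 tlt.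
  have dd1 : dd <= 1 - t by rewrite ge_min lexx.
  have dd2 : dd <= e / (`|y| + 1) by rewrite ge_min lexx orbT.
  have : S (t + dd).
    split; first by apply/andP; split; lra.
    apply: he => /=; rewrite -scalerBl normrZ.
    have -> : t - (t + dd) = - dd by rewrite opprD addrA subrr add0r.
    rewrite normrN ger0_norm ?ltW //.
    have h1 : dd * `|y| <= e / (`|y| + 1) * `|y| by apply: ler_wpM2r.
    apply: (le_lt_trans h1); rewrite mulrAC ltr_pdivrMr ?ltr_wpDl //.
    by rewrite ltr_pM2l //; lra.
  move=> /sup_upper_bound => /(_ hS); rewrite -/t; lra.
have bz : bdry C (t *: y) by split; [exact: subset_closure | exact: nint].
have hcr : 0 < (1 - t) * (r / 4) by rewrite mulr_gt0 ?subr_gt0 // divr_gt0.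
have [_ [[n _ <-] hn]] := dense _ bz _ (nbhsx_ballx (t *: y) _ hcr).
rewrite -ball_normE in hn.
have [hd [hnm [_ hs]]] := hf n.
have hb := dual_bound hd hnm (x n - t *: y).
rewrite (lfB hd.1) (lfZ hd.1) in hb.
have hy := Hy n I; rewrite /= in hy.
have hcn := hc n.
have h1 : t * f n y <= t * f n (x n) by apply: ler_wpM2l.
have h2 : (1 - t) * (r / 4) < (1 - t) * f n (x n) by rewrite ltr_pM2l // subr_gt0.
move: hn => /=; rewrite distrC => hn.
have := le_lt_trans (le_trans (ler_norm _) hb) hn.
lra.
Qed.
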